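(* Let $n\in\mathbb{N}$ be odd (resp. even). Let $f:\mathbb{S}^1\to\mathbb{S}^1$ be a $C^n$, non-decreasing, degree one map with lift $F$. Suppose there is an interval $U=\pi((a,b))$ such that $F^{(m)}(x)=0$ for all $x\in(a,b)$ and all $m\ge1$. Then for every $\epsilon\in(0,\tfrac14)$ and every $\delta\in(0,1)$ there exists a $C^n$, non-decreasing, degree one map $\tilde f:\mathbb{S}^1\to\mathbb{S}^1$ with lift $\tilde F$ such that: (1) $\|\tilde F-F\|_{C^n}<\delta$; (2) $\rho(\tilde f)=\rho(f)$; (3) $|\tilde F^{(1)}(x)-F^{(1)}(x)|<\delta F^{(1)}(x)$ for all $x\notin\big(a-\tfrac14(b-a),\,b+\tfrac14(b-a)\big)$; (4) all derivatives $\tilde F^{(m)}(x)$, $m\ge1$, vanish exactly for $x\in\big(a,a+\tfrac{\epsilon}{2^n}\big)\cup\big(a+\tfrac{2\epsilon}{2^n},b\big)$ (resp., for $n$ even, exactly for $x\in\big(a,b-\tfrac{2\epsilon}{2^n}\big)\cup\big(b-\tfrac{\epsilon}{2^n},b\big)$).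
   Context: $\pi:\mathbb{R}\to\mathbb{S}^1=\mathbb{R}/\mathbb{Z}$ is the projection. $F$ denotes the lift of $f$ with $F(0)\in[0,1)$. $F^{(m)}$ is the $m$-th derivative. $\|F\|_{C^j}=\sup_{x\in\mathbb{R},\,0\le i\le j}|F^{(i)}(x)|$. A degree one map satisfies $F(x+1)=F(x)+1$, and a non-decreasing map has a non-decreasing lift. $\rho$ denotes the rotation number $\lim_{k\to\infty} F^k(x)/k$. It is implicitly assumed that $b-a>2\epsilon/2^n$, so that the intervals in (4) are non-empty. *)

(* Defs.v *)
From Stdlib Require Import Reals Lra Lia ZArith.
Open Scope R_scope.

(* D is the family of derivatives of F up to order n, and F is C^n:
   D 0 = F, D (m+1) is the derivative of D m for m < n, D n continuous.
   (Values D m for m > n are irrelevant.) *)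
Definition Cn_with (n : nat) (F : R -> R) (D : nat -> R -> R) : Prop :=
  (forall x, D 0%nat x = F x) /\
  (forall (m : nat) (x : R), (m < n)%nat -> derivable_pt_lim (D m) x (D (S m) x)) /\
  continuity (D n).

Definition degree_one (F : R -> R) : Prop := forall x, F (x + 1) = F x + 1.

Definition nondecreasing (F : R -> R) : Prop := forall x y, x <= y -> F x <= F y.

Definition normalized_lift (F : R -> R) : Prop := 0 <= F 0 < 1.

Definition rotation_number (F : R -> R) (r : R) : Prop :=
  forall x, Un_cv (fun k : nat => Nat.iter k F x / INR k) r.

(* closure, inside (a,b), of the set in item (4) of the lemma *)
Definition flat_set (n : nat) (a b eps x : R) : Prop :=
  if Nat.even n
  then (a < x <= b - 2 * eps / 2 ^ n) \/ (b - eps / 2 ^ n <= x < b)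
  else (a < x <= a + eps / 2 ^ n) \/ (a + 2 * eps / 2 ^ n <= x < b).

(* Main.v *)
Require Import Defs.
From Stdlib Require Import Reals Lra Lia ZArith Classical FunctionalExtensionality.
From Coquelicot Require Import Coquelicot.
Open Scope R_scope.

Lemma cont_eps f x0 : continuity_pt f x0 -> forall eps, eps > 0 ->
  exists d, d > 0 /\ forall x, Rabs (x - x0) < d -> Rabs (f x - f x0) < eps.
Proof.
  intros H eps He. destruct (H eps He) as [d [Hd Hx]].
  exists d; split; auto. intros x Hx'.
  destruct (Req_dec x x0) as [->|Hne].
  - rewrite Rminus_diag, Rabs_R0; lra.
  - apply (Hx x). split; [split; [exact I|auto]|]. exact Hx'.
Qed.

Lemma deriv_loc f g y l d : d > 0 -> (forall z, Rabs (z - y) < d -> f z = g z) ->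
  derivable_pt_lim g y l -> derivable_pt_lim f y l.
Proof.
  intros Hd Heq Hg eps He. destruct (Hg eps He) as [del Hdel].
  assert (Hm : 0 < Rmin del d) by (apply Rmin_pos; [apply cond_pos|lra]).
  exists (mkposreal _ Hm). intros h Hh Hhd. simpl in Hhd.
  rewrite (Heq (y+h)), (Heq y).
  - apply Hdel; auto. eapply Rlt_le_trans; [exact Hhd|apply Rmin_l].
  - rewrite Rminus_diag, Rabs_R0; lra.
  - replace (y + h - y) with h by ring. eapply Rlt_le_trans; [exact Hhd|apply Rmin_r].
Qed.

Lemma cont_loc f g y d : d > 0 -> (forall z, Rabs (z - y) < d -> f z = g z) ->
  continuity_pt g y -> continuity_pt f y.
Proof.
  intros Hd Heq Hg eps He. destruct (cont_eps g y Hg eps He) as [del [Hdel Hx]].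
  exists (Rmin del d). split. apply Rmin_pos; lra.
  intros x [_ Hx']. simpl in *. unfold R_dist in *.
  assert (Rabs (x - y) < d) by (eapply Rlt_le_trans; [exact Hx'|apply Rmin_r]).
  rewrite (Heq x), (Heq y); auto.
  - apply Hx. eapply Rlt_le_trans; [exact Hx'|apply Rmin_l].
  - rewrite Rminus_diag, Rabs_R0; lra.
Qed.

Lemma deriv_const_loc f y c d : d > 0 -> (forall z, Rabs (z - y) < d -> f z = c) ->
  derivable_pt_lim f y 0.
Proof.
  intros Hd H. apply (deriv_loc f (fun _ => c) y 0 d Hd H).
  apply derivable_pt_lim_const.
Qed.

Lemma zero_left_end (D : R -> R) u p : u < p -> continuity_pt D p ->
  (forall x, u < x < p -> D x = 0) -> D p = 0.
Proof.
  intros Hup Hc Hz. destruct (Req_dec (D p) 0) as [|Hne]; auto. exfalso.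
  destruct (cont_eps D p Hc (Rabs (D p))) as [d [Hd Hx]]. apply Rabs_pos_lt; auto.
  set (x := p - Rmin d (p - u) / 2).
  assert (Hm : 0 < Rmin d (p - u)) by (apply Rmin_pos; lra).
  assert (Hm1 := Rmin_l d (p-u)). assert (Hm2 := Rmin_r d (p-u)).
  specialize (Hx x). rewrite (Hz x) in Hx.
  - rewrite Rminus_0_l, Rabs_Ropp in Hx. assert (Rabs (D p) < Rabs (D p)); [apply Hx|lra].
    unfold x. rewrite Rabs_left; lra.
  - unfold x; lra.
Qed.

Lemma zero_right_end (D : R -> R) q v : q < v -> continuity_pt D q ->
  (forall x, q < x < v -> D x = 0) -> D q = 0.
Proof.
  intros Hup Hc Hz. destruct (Req_dec (D q) 0) as [|Hne]; auto. exfalso.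
  destruct (cont_eps D q Hc (Rabs (D q))) as [d [Hd Hx]]. apply Rabs_pos_lt; auto.
  set (x := q + Rmin d (v - q) / 2).
  assert (Hm : 0 < Rmin d (v - q)) by (apply Rmin_pos; lra).
  assert (Hm1 := Rmin_l d (v-q)). assert (Hm2 := Rmin_r d (v-q)).
  specialize (Hx x). rewrite (Hz x) in Hx.
  - rewrite Rminus_0_l, Rabs_Ropp in Hx. assert (Rabs (D q) < Rabs (D q)); [apply Hx|lra].
    unfold x. rewrite Rabs_right; lra.
  - unfold x; lra.
Qed.

Lemma deriv_nonneg_incr f f' : (forall x, derivable_pt_lim f x (f' x)) ->
  (forall x, 0 <= f' x) -> nondecreasing f.
Proof.
  intros Hd Hp x y Hxy. destruct (Req_dec x y) as [->|Hne]; [lra|].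
  destruct (MVT_cor2 f f' x y) as [c [Hc _]]; [lra| intros; auto|].
  assert (0 <= f' c * (y - x)) by (apply Rmult_le_pos; auto; lra). lra.
Qed.

Lemma deriv_zero_const f f' u v : (forall x, derivable_pt_lim f x (f' x)) ->
  (forall x, u < x < v -> f' x = 0) -> forall x, u <= x <= v -> f x = f u.
Proof.
  intros Hd Hz x Hx. destruct (Req_dec x u) as [->|Hne]; auto.
  destruct (MVT_cor2 f f' u x) as [c [Hc Hc2]]; [lra| intros; auto|].
  rewrite Hz in Hc; lra.
Qed.

Lemma deriv_nonneg_of_incr f f' : (forall x, derivable_pt_lim f x (f' x)) ->
  nondecreasing f -> forall x, 0 <= f' x.
Proof.
  intros Hd Hn x.
  assert (pr : derivable f) by (intro y; exists (f' y); apply Hd).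
  rewrite <- (derive_pt_eq_0 f x (f' x) (pr x) (Hd x)).
  apply nonneg_derivative_0. exact Hn.
Qed.

Lemma shift_nat (G : R -> R) c : (forall x, G (x + 1) = G x + c) ->
  forall (k : nat) x, G (x + INR k) = G x + INR k * c.
Proof.
  intros H k. induction k as [|k IH]; intro x.
  - simpl. rewrite Rplus_0_r; ring.
  - rewrite S_INR. replace (x + (INR k + 1)) with ((x + INR k) + 1) by ring.
    rewrite H, IH. ring.
Qed.

Lemma shift_Z (G : R -> R) c : (forall x, G (x + 1) = G x + c) ->
  forall (k : Z) x, G (x + IZR k) = G x + IZR k * c.
Proof.
  intros H k x. destruct k as [|p|p].
  - simpl. rewrite Rplus_0_r; ring.
  - rewrite <- positive_nat_Z, <- INR_IZR_INZ. apply shift_nat; auto.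
  - rewrite <- Pos2Z.opp_pos, opp_IZR, <- positive_nat_Z, <- INR_IZR_INZ.
    pose proof (shift_nat G c H (Pos.to_nat p) (x - INR (Pos.to_nat p))) as E.
    replace (x - INR (Pos.to_nat p) + INR (Pos.to_nat p)) with x in E by ring.
    replace (x + - INR (Pos.to_nat p)) with (x - INR (Pos.to_nat p)) by ring. lra.
Qed.

Lemma deg_Z (G : R -> R) : degree_one G -> forall (k : Z) x, G (x + IZR k) = G x + IZR k.
Proof.
  intros H k x. rewrite (shift_Z G 1 H k x). ring.
Qed.

Lemma per_Z (G : R -> R) : (forall x, G (x + 1) = G x) -> forall (k : Z) x, G (x + IZR k) = G x.
Proof.
  intros H k x. rewrite (shift_Z G 0). ring. intro y; rewrite H; ring.
Qed.

Lemma int_shift x y : exists k : Z, x <= y + IZR k <= x + 1.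
Proof.
  destruct (archimed (x - y)) as [H1 H2]. exists (up (x - y)). lra.
Qed.

Lemma bounded_periodic (D : R -> R) : continuity D -> (forall x, D (x + 1) = D x) ->
  exists M, 0 < M /\ forall x, Rabs (D x) <= M.
Proof.
  intros Hc Hp.
  destruct (continuity_ab_maj (fun x => Rabs (D x)) 0 1) as [xm [Hm _]]. lra.
  { intros c _. apply (continuity_pt_comp D Rabs); [apply Hc|apply Rcontinuity_abs]. }
  exists (Rabs (D xm) + 1). split. pose proof (Rabs_pos (D xm)); lra.
  intro x. destruct (int_shift 0 x) as [k Hk].
  rewrite <- (per_Z D Hp k x).
  destruct (Req_dec (x + IZR k) 1) as [E|E].
  - rewrite E. rewrite <- (Rplus_0_l 1), Hp. specialize (Hm 0). simpl in Hm. lra.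
  - specialize (Hm (x + IZR k)). simpl in Hm. assert (0 <= x + IZR k <= 1) by lra. specialize (Hm H). lra.
Qed.

Lemma Rabs_def2b x a : Rabs x <= a -> - a <= x <= a.
Proof. intro H. unfold Rabs in H. destruct (Rcase_abs x); lra. Qed.

Lemma finite_bound (f : nat -> R -> R) K :
  (forall i, (i <= K)%nat -> exists M, 0 < M /\ forall x, Rabs (f i x) <= M) ->
  exists M, 0 < M /\ forall i x, (i <= K)%nat -> Rabs (f i x) <= M.
Proof.
  induction K; intro H.
  - destruct (H 0%nat (le_n 0)) as [M [HM HMx]]. exists M. split; auto.
    intros i x Hi. assert (i = 0%nat) by lia. subst. auto.
  - destruct IHK as [M1 [HM1 HMx1]]. intros i Hi. apply H. lia.
    destruct (H (S K) (le_n _)) as [M2 [HM2 HMx2]].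
    exists (Rmax M1 M2). split. eapply Rlt_le_trans; [exact HM1|apply Rmax_l].
    intros i x Hi. destruct (Nat.eq_dec i (S K)) as [->|Hne].
    + eapply Rle_trans; [apply HMx2|apply Rmax_r].
    + eapply Rle_trans; [apply HMx1; lia|apply Rmax_l].
Qed.

Definition Ck (k : nat) (f : R -> R) := exists D, Cn_with k f D.

Lemma Cn_D0 k f D : Cn_with k f D -> D 0%nat = f.
Proof. intros [H _]. apply functional_extensionality; auto. Qed.

Lemma Cn_cont k f D : Cn_with k f D -> forall m, (m <= k)%nat -> continuity (D m).
Proof.
  intros [H0 [H1 H2]] m Hm x. destruct (Nat.eq_dec m k) as [->|Hne]; [apply H2|].
  apply derivable_continuous_pt. exists (D (S m) x). apply H1. lia.
Qed.

Lemma Ck_cont k f : Ck k f -> continuity f.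
Proof.
  intros [D HD]. rewrite <- (Cn_D0 _ _ _ HD). apply (Cn_cont _ _ _ HD). lia.
Qed.

Lemma Ck0 f : continuity f -> Ck 0 f.
Proof. intro H. exists (fun _ => f). repeat split; auto. intros; lia. Qed.

Lemma CkS_intro k f g : (forall x, derivable_pt_lim f x (g x)) -> Ck k g -> Ck (S k) f.
Proof.
  intros Hd [Dg [H0 [H1 H2]]].
  exists (fun m => match m with O => f | S m' => Dg m' end).
  repeat split; auto. intros m x Hm. destruct m as [|m].
  - rewrite H0. auto.
  - apply H1. lia.
Qed.

Lemma CkS_elim k f : Ck (S k) f -> exists g, (forall x, derivable_pt_lim f x (g x)) /\ Ck k g.
Proof.
  intros [D [H0 [H1 H2]]]. exists (D 1%nat). split.
  - intro x. assert (E : D 0%nat = f) by (apply functional_extensionality; auto).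
    rewrite <- E. apply H1. lia.
  - exists (fun m => D (S m)). repeat split; auto. intros m x Hm. apply H1. lia.
Qed.

Lemma Ck_weak k f : Ck (S k) f -> Ck k f.
Proof.
  intros [D HD]. exists D. destruct HD as [H0 [H1 H2]]. split; [auto|split].
  - intros m x Hm. apply H1. lia.
  - apply (Cn_cont (S k) f D (conj H0 (conj H1 H2))). lia.
Qed.

Lemma Ck_const k c : Ck k (fun _ => c).
Proof.
  induction k.
  - apply Ck0. intro x. apply continuity_const. intros a b; reflexivity.
  - apply (CkS_intro k _ (fun _ => 0)); [intro; apply derivable_pt_lim_const|].
    clear IHk. induction k.
    + apply Ck0. intro x. apply continuity_const. intros a b; reflexivity.
    + apply (CkS_intro k _ (fun _ => 0)); [intro; apply derivable_pt_lim_const|auto].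
Qed.

Lemma Ck_plus k f g : Ck k f -> Ck k g -> Ck k (fun x => f x + g x).
Proof.
  revert f g. induction k; intros f g Hf Hg.
  - apply Ck0. apply Ck_cont in Hf. apply Ck_cont in Hg. intro x.
    apply (continuity_pt_plus f g); auto.
  - destruct (CkS_elim _ _ Hf) as [f' [Hf1 Hf2]].
    destruct (CkS_elim _ _ Hg) as [g' [Hg1 Hg2]].
    apply (CkS_intro _ _ (fun x => f' x + g' x)); [|apply IHk; auto].
    intro x. exact (derivable_pt_lim_plus f g x _ _ (Hf1 x) (Hg1 x)).
Qed.

Lemma Ck_mult k f g : Ck k f -> Ck k g -> Ck k (fun x => f x * g x).
Proof.
  revert f g. induction k; intros f g Hf Hg.
  - apply Ck0. apply Ck_cont in Hf. apply Ck_cont in Hg. intro x.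
    apply (continuity_pt_mult f g); auto.
  - destruct (CkS_elim _ _ Hf) as [f' [Hf1 Hf2]].
    destruct (CkS_elim _ _ Hg) as [g' [Hg1 Hg2]].
    apply (CkS_intro _ _ (fun x => f' x * g x + f x * g' x)).
    + intro x. exact (derivable_pt_lim_mult f g x _ _ (Hf1 x) (Hg1 x)).
    + apply Ck_plus; apply IHk; auto; apply Ck_weak; auto.
Qed.

Lemma Ck_scal k c f : Ck k f -> Ck k (fun x => c * f x).
Proof. intro H. apply (Ck_mult k (fun _ => c) f); auto. apply Ck_const. Qed.

Definition Smooth (u : R -> R) (Du : nat -> R -> R) :=
  (forall x, Du 0%nat x = u x) /\ forall m x, derivable_pt_lim (Du m) x (Du (S m) x).

Lemma Smooth_shift u Du : Smooth u Du -> Smooth (Du 1%nat) (fun m => Du (S m)).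
Proof. intros [H0 H1]. split; auto. Qed.

Lemma Smooth_Ck u Du : Smooth u Du -> forall k, Ck k u.
Proof.
  intros [H0 H1] k. exists Du. split; [auto|split]. intros m x _; apply H1.
  intro x. apply derivable_continuous_pt. exists (Du (S k) x). apply H1.
Qed.

Lemma Ck_comp k T : Ck k T -> forall u Du, Smooth u Du -> Ck k (fun x => T (u x)).
Proof.
  revert T. induction k; intros T HT u Du Hu.
  - apply Ck0. apply Ck_cont in HT. pose proof (Smooth_Ck u Du Hu 0) as Hu0.
    apply Ck_cont in Hu0. intro x. apply (continuity_pt_comp u T); auto.
  - destruct (CkS_elim _ _ HT) as [T' [HT1 HT2]].
    apply (CkS_intro _ _ (fun x => T' (u x) * Du 1%nat x)).
    + intro x. destruct Hu as [H0 H1].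
      assert (Eu : Du 0%nat = u) by (apply functional_extensionality; auto).
      assert (Hd : derivable_pt_lim u x (Du 1%nat x)) by (rewrite <- Eu; apply H1).
      exact (derivable_pt_lim_comp u T x _ _ Hd (HT1 (u x))).
    + apply Ck_mult. apply (IHk T' HT2 u Du Hu). apply (Smooth_Ck _ _ (Smooth_shift _ _ Hu)).
Qed.

Lemma Cn_unique k f D D' : Cn_with k f D -> Cn_with k f D' ->
  forall m x, (m <= k)%nat -> D m x = D' m x.
Proof.
  intros [H0 [H1 _]] [H0' [H1' _]] m. induction m; intros x Hm.
  - rewrite H0, H0'; auto.
  - assert (E : D m = D' m) by (apply functional_extensionality; intro; apply IHm; lia).
    apply (uniqueness_limite (D m) x). apply H1; lia. rewrite E. apply H1'; lia.
Qed.

Lemma Cn_zero_open k f D u v : Cn_with k f D -> (forall x, u < x < v -> D 1%nat x = 0) ->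
  forall m x, (1 <= m <= k)%nat -> u < x < v -> D m x = 0.
Proof.
  intros [H0 [H1 _]] Hz m. induction m; intros x Hm Hx; [lia|].
  destruct m as [|m]; [apply Hz; auto|].
  apply (uniqueness_limite (D (S m)) x). apply H1; lia.
  apply (deriv_const_loc _ x 0 (Rmin (x - u) (v - x))).
  apply Rmin_pos; lra. intros z Hz'.
  apply IHm; [lia|]. assert (Hm1 := Rmin_l (x-u) (v-x)). assert (Hm2 := Rmin_r (x-u) (v-x)).
  apply Rabs_def2 in Hz'. lra.
Qed.

Lemma dshift1 y : derivable_pt_lim (fun y => y + 1) y 1.
Proof.
  pose proof (derivable_pt_lim_plus id (fct_cte 1) y 1 0 (derivable_pt_lim_id y) (derivable_pt_lim_const 1 y)) as H.
  rewrite Rplus_0_r in H. exact H.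
Qed.

Lemma deriv_shift1 g y l : derivable_pt_lim g (y + 1) l -> derivable_pt_lim (fun y => g (y + 1)) y l.
Proof.
  intro H. pose proof (derivable_pt_lim_comp (fun y => y + 1) g y 1 l (dshift1 y) H) as H'.
  rewrite Rmult_1_r in H'. exact H'.
Qed.

Lemma deriv_minus_const g y l c : derivable_pt_lim g y l -> derivable_pt_lim (fun y => g y - c) y l.
Proof.
  intro H. pose proof (derivable_pt_lim_minus g (fct_cte c) y l 0 H (derivable_pt_lim_const c y)) as H'.
  rewrite Rminus_0_r in H'. exact H'.
Qed.

Lemma Cn_shift k f D c : Cn_with k f D -> (forall x, f (x + 1) = f x + c) ->
  forall m x, (1 <= m <= k)%nat -> D m (x + 1) = D m x.
Proof.
  intros HD Hp m x Hm.
  set (D' := fun j y => D j (y + 1) - (if Nat.eqb j 0 then c else 0)).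
  assert (HD' : Cn_with k f D').
  { destruct HD as [H0 [H1 H2]]. split; [|split].
    - intro y. unfold D'. simpl. rewrite H0, Hp. ring.
    - intros j y Hj. unfold D'. 
      replace (D (S j) (y + 1) - (if (S j =? 0)%nat then c else 0)) with (D (S j) (y + 1)) by (simpl; ring).
      apply deriv_minus_const. apply deriv_shift1. apply H1; lia.
    - intro y. unfold D'. apply continuity_pt_minus.
      + apply (continuity_pt_comp (fun y => y + 1) (D k)).
        apply derivable_continuous_pt. exists 1. apply dshift1. apply H2.
      + apply continuity_pt_const; intros ? ?; reflexivity. }
  pose proof (Cn_unique k f D D' HD HD' m x ltac:(lia)) as E.
  unfold D' in E. destruct m; [lia|]. simpl in E. lra.
Qed.

Lemma Cn_d1 k f D : Cn_with (S k) f D -> forall x, derivable_pt_lim f x (D 1%nat x).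
Proof.
  intros HD x. rewrite <- (Cn_D0 _ _ _ HD). destruct HD as [_ [H1 _]]. apply H1. lia.
Qed.

Lemma deriv_lin f g u x a b c l t :
  derivable_pt_lim f x a -> derivable_pt_lim g x b -> derivable_pt_lim u x c ->
  derivable_pt_lim (fun y => f y + l * (g y - u y) + t) x (a + l * (b - c)).
Proof.
  intros Hf Hg Hu.
  pose proof (derivable_pt_lim_minus g u x b c Hg Hu) as H1.
  pose proof (derivable_pt_lim_scal (g - u)%F l x (b - c) H1) as H2.
  pose proof (derivable_pt_lim_plus f (mult_real_fct l (g - u)%F) x a (l * (b - c)) Hf H2) as H3.
  pose proof (derivable_pt_lim_plus _ (fct_cte t) x _ 0 H3 (derivable_pt_lim_const t x)) as H4.
  rewrite Rplus_0_r in H4. exact H4.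
Qed.

Lemma Cn_lin k F DF S1 D1 S2 D2 l t : Cn_with k F DF -> Cn_with k S1 D1 -> Cn_with k S2 D2 ->
  Cn_with k (fun x => F x + l * (S1 x - S2 x) + t)
    (fun m x => DF m x + l * (D1 m x - D2 m x) + (if Nat.eqb m 0 then t else 0)).
Proof.
  intros [A0 [A1 A2]] [B0 [B1 B2]] [C0 [C1 C2]]. split; [|split].
  - intro x. simpl. rewrite A0, B0, C0. ring.
  - intros m x Hm. cbn [Nat.eqb].
    assert (E : (if (m =? 0)%nat then t else 0) = (if (m =? 0)%nat then t else 0)) by reflexivity.
    replace (DF (S m) x + l * (D1 (S m) x - D2 (S m) x) + 0) with (DF (S m) x + l * (D1 (S m) x - D2 (S m) x)) by ring.
    apply deriv_lin; auto.
  - intro x. apply continuity_pt_plus. apply continuity_pt_plus. apply A2.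
    apply continuity_pt_scal. apply continuity_pt_minus. apply B2. apply C2.
    apply continuity_pt_const. intros ? ?; reflexivity.
Qed.

Definition Tp (N : nat) (y : R) : R := if Rle_dec y 0 then 0 else y ^ N.

Lemma Tp_bound N y : Rabs (Tp N y) <= Rabs y ^ N.
Proof.
  unfold Tp. destruct (Rle_dec y 0).
  - rewrite Rabs_R0. apply pow_le, Rabs_pos.
  - rewrite <- RPow_abs. lra.
Qed.

Lemma Tp_nonneg N y : 0 <= Tp N y.
Proof. unfold Tp. destruct (Rle_dec y 0); [lra|]. apply pow_le; lra. Qed.

Lemma Tp_pos N y : 0 < y -> 0 < Tp N y.
Proof. intro H. unfold Tp. destruct (Rle_dec y 0); [lra|]. apply pow_lt; lra. Qed.

Lemma Tp_zero N y : y <= 0 -> Tp N y = 0.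
Proof. intro H. unfold Tp. destruct (Rle_dec y 0); [lra|tauto]. Qed.

Lemma Tp_le N y c : 0 <= c -> y <= c -> Tp N y <= c ^ N.
Proof.
  intros Hc H. unfold Tp. destruct (Rle_dec y 0).
  - apply pow_le; lra.
  - apply pow_incr; lra.
Qed.

Lemma Tp_cont1 : continuity (Tp 1).
Proof.
  intro y. destruct (Rtotal_order y 0) as [Hy|[Hy|Hy]].
  - apply (cont_loc _ (fun _ => 0) y (-y)). lra.
    intros z Hz. apply Rabs_def2 in Hz. apply Tp_zero. lra.
    apply continuity_pt_const. intros ? ?; reflexivity.
  - subst y. intros eps He. exists eps. split; auto. intros z [_ Hz].
    simpl in *. unfold R_dist in *. rewrite (Tp_zero 1 0) by lra.
    rewrite Rminus_0_r in *. eapply Rle_lt_trans; [apply Tp_bound|]. simpl. lra.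
  - apply (cont_loc _ (fun z => z ^ 1) y y). lra.
    intros z Hz. apply Rabs_def2 in Hz. unfold Tp. destruct (Rle_dec z 0); [lra|auto].
    apply derivable_continuous_pt. exists (INR 1 * y ^ 0). apply derivable_pt_lim_pow.
Qed.

Lemma Tp_deriv M y : derivable_pt_lim (Tp (S (S M))) y (INR (S (S M)) * Tp (S M) y).
Proof.
  destruct (Rtotal_order y 0) as [Hy|[Hy|Hy]].
  - rewrite (Tp_zero _ y) by lra. rewrite Rmult_0_r.
    apply (deriv_const_loc _ y 0 (-y)). lra.
    intros z Hz. apply Rabs_def2 in Hz. apply Tp_zero. lra.
  - subst y. rewrite (Tp_zero _ 0) by lra. rewrite Rmult_0_r.
    intros eps He. assert (Hm : 0 < Rmin 1 eps) by (apply Rmin_pos; lra).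
    exists (mkposreal _ Hm). intros h Hh Hhd. simpl in Hhd.
    assert (H1 := Rmin_l 1 eps). assert (H2 := Rmin_r 1 eps).
    rewrite Rplus_0_l, (Tp_zero _ 0) by lra. rewrite Rminus_0_r, Rminus_0_r.
    unfold Rdiv. rewrite Rabs_mult, Rabs_inv.
    assert (Hb := Tp_bound (S (S M)) h).
    assert (Ha : 0 < Rabs h) by (apply Rabs_pos_lt; auto).
    apply (Rmult_lt_reg_r (Rabs h)); auto.
    rewrite Rmult_assoc, Rinv_l by lra. rewrite Rmult_1_r.
    eapply Rle_lt_trans; [exact Hb|]. simpl.
    assert (Rabs h ^ M <= 1).
    { rewrite <- (pow1 M). apply pow_incr. split. apply Rabs_pos. lra. }
    assert (0 <= Rabs h ^ M) by (apply pow_le, Rabs_pos).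
    assert (Rabs h * (Rabs h * Rabs h ^ M) <= Rabs h * Rabs h) .
    { apply Rmult_le_compat_l. lra. nra. }
    assert (Rabs h * Rabs h < eps * Rabs h). { apply Rmult_lt_compat_r; lra. }
    lra.
  - apply (deriv_loc _ (fun z => z ^ S (S M)) y _ y). lra.
    intros z Hz. apply Rabs_def2 in Hz. unfold Tp. destruct (Rle_dec z 0); [lra|auto].
    unfold Tp. destruct (Rle_dec y 0); [lra|]. apply derivable_pt_lim_pow.
Qed.

Lemma Ck_Tp N : Ck N (Tp (S N)).
Proof.
  induction N.
  - apply Ck0. apply Tp_cont1.
  - apply (CkS_intro _ _ (fun y => INR (S (S N)) * Tp (S N) y)).
    + intro y. apply Tp_deriv.
    + apply Ck_scal. auto.
Qed.

Definition Dcos (al be ga : R) (m : nat) (x : R) : R :=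
  al ^ m * cos (al * x + be + INR m * (PI / 2)) - (if Nat.eqb m 0 then ga else 0).

Lemma Smooth_cos al be ga : Smooth (fun x => cos (al * x + be) - ga) (Dcos al be ga).
Proof.
  split.
  - intro x. unfold Dcos. simpl. rewrite Rmult_0_l, Rplus_0_r. ring.
  - intros m x. unfold Dcos.
    replace (al ^ S m * cos (al * x + be + INR (S m) * (PI / 2)) - (if (S m =? 0)%nat then ga else 0))
      with (al ^ m * (- sin (al * x + be + INR m * (PI/2)) * al)).
    + apply deriv_minus_const. apply is_derive_Reals. auto_derive; auto. ring.
    + rewrite S_INR. cbn [pow Nat.eqb].
      replace (al * x + be + (INR m + 1) * (PI / 2)) with ((al * x + be + INR m * (PI / 2)) + PI/2) by ring.
      rewrite cos_plus, cos_PI2, sin_PI2. ring.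
Qed.

Definition bump (N : nat) (m w : R) (x : R) : R :=
  Tp (S N) (cos (2 * PI * x + - (2 * PI * m)) - cos (PI * w)).

Lemma bump_Ck N m w : Ck N (bump N m w).
Proof.
  apply (Ck_comp N (Tp (S N)) (Ck_Tp N) _ _ (Smooth_cos (2*PI) (- (2 * PI * m)) (cos (PI * w)))).
Qed.

Lemma bump_nonneg N m w x : 0 <= bump N m w x.
Proof. apply Tp_nonneg. Qed.

Lemma bump_le N m w x : bump N m w x <= 2 ^ S N.
Proof.
  apply Tp_le. lra. pose proof (COS_bound (2 * PI * x + - (2 * PI * m))). pose proof (COS_bound (PI * w)). lra.
Qed.

Lemma bump_per N m w x : bump N m w (x + 1) = bump N m w x.
Proof.
  unfold bump. f_equal. f_equal.
  replace (2 * PI * (x + 1) + - (2 * PI * m)) with ((2 * PI * x + - (2 * PI * m)) + 2 * INR 1 * PI) by (simpl; ring).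
  apply cos_period.
Qed.

Lemma cos_abs t : cos (Rabs t) = cos t.
Proof. unfold Rabs. destruct (Rcase_abs t); auto. apply cos_neg. Qed.

Lemma bump_pos N m w x : 0 < w < 1 -> Rabs (x - m) < w / 2 -> 0 < bump N m w x.
Proof.
  intros Hw Hx. apply Tp_pos.
  set (t := 2 * PI * x + - (2 * PI * m)).
  assert (Ht : Rabs t = 2 * PI * Rabs (x - m)).
  { unfold t. replace (2 * PI * x + - (2 * PI * m)) with ((2 * PI) * (x - m)) by ring.
    rewrite Rabs_mult, Rabs_right; auto. pose proof PI_RGT_0; lra. }
  rewrite <- cos_abs. pose proof PI_RGT_0.
  assert (cos (PI * w) < cos (Rabs t)); [|lra].
  pose proof (Rabs_pos (x - m)).
  apply cos_decreasing_1; try apply Rabs_pos; try nra; rewrite Ht; nra.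
Qed.

Lemma bump_supp N m w x : 0 < w < 1 -> 0 < bump N m w x ->
  exists k : Z, Rabs (x + IZR k - m) < w / 2.
Proof.
  intros Hw Hb. destruct (archimed (x - m - 1/2)) as [H1 H2].
  exists (- up (x - m - 1/2))%Z.
  rewrite <- (per_Z (bump N m w) (bump_per N m w) (- up (x - m - 1/2))%Z x) in Hb.
  set (x' := x + IZR (- up (x - m - 1 / 2))) in *.
  assert (Hx' : Rabs (x' - m) <= 1/2).
  { unfold x'. rewrite opp_IZR. apply Rabs_le. lra. }
  destruct (Rlt_le_dec (Rabs (x' - m)) (w/2)) as [|Hge]; auto. exfalso.
  unfold bump in Hb.
  set (t := 2 * PI * x' + - (2 * PI * m)) in Hb.
  assert (Ht : Rabs t = 2 * PI * Rabs (x' - m)).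
  { unfold t. replace (2 * PI * x' + - (2 * PI * m)) with ((2 * PI) * (x' - m)) by ring.
    rewrite Rabs_mult, Rabs_right; auto. pose proof PI_RGT_0; lra. }
  rewrite <- cos_abs in Hb. pose proof PI_RGT_0.
  assert (cos (Rabs t) <= cos (PI * w)).
  { pose proof (Rabs_pos (x' - m)). apply cos_decr_1; try apply Rabs_pos; try nra; rewrite Ht; nra. }
  rewrite Tp_zero in Hb; lra.
Qed.

Lemma FTC (f : R -> R) : continuity f -> forall x, derivable_pt_lim (fun y => RInt f 0 y) x (f x).
Proof.
  intros Hf x. apply is_derive_Reals. apply is_derive_RInt with (a:=0).
  apply filter_forall. intro y. apply (RInt_correct (V:=R_CompleteNormedModule)). apply ex_RInt_continuous.
  intros; apply continuity_pt_filterlim; auto. apply continuity_pt_filterlim; auto.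
Qed.

Lemma staircase k (psi : R -> R) : Ck k psi -> (forall x, 0 <= psi x) ->
  (forall x, psi (x + 1) = psi x) -> (exists c0, 0 < psi c0) ->
  exists (S : R -> R) (I : R), 0 < I /\ Ck (Datatypes.S k) S /\
    (forall x, derivable_pt_lim S x (psi x / I)) /\ (forall x, S (x + 1) = S x + 1).
Proof.
  intros Hk Hnn Hper [c0 Hc0].
  assert (Hc : continuity psi) by (apply (Ck_cont k); auto).
  set (P := fun x => RInt psi 0 x).
  assert (dP : forall x, derivable_pt_lim P x (psi x)).
  { intro x. apply FTC. auto. }
  assert (P0 : P 0 = 0) by (unfold P; rewrite RInt_point; reflexivity).
  set (I := P 1).
  assert (HPer : forall x, P (x + 1) = P x + I).
  { intro x.
    set (Q := fun y => P (y + 1) - P y).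
    assert (dQ : forall y, derivable_pt_lim Q y 0).
    { intro y. replace 0 with (psi (y+1) - psi y) by (rewrite Hper; ring).
      apply (derivable_pt_lim_minus (fun y => P (y+1)) P). apply deriv_shift1. apply dP. apply dP. }
    assert (Q x = Q 0).
    { destruct (Rle_dec 0 x).
      - apply (deriv_zero_const Q (fun _ => 0) 0 x dQ); auto. lra.
      - symmetry. apply (deriv_zero_const Q (fun _ => 0) x 0 dQ); auto. lra. }
    unfold Q in H. rewrite Rplus_0_l, P0 in H. unfold I. lra. }
  assert (Pinc : nondecreasing P) by (apply (deriv_nonneg_incr P psi dP Hnn)).
  assert (HI : 0 < I).
  { destruct (Rlt_le_dec 0 I); auto. exfalso.
    assert (Hcst : forall z, Rabs (z - c0) < 1/2 -> P z = P (c0 - 1/2)).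
    { intros z Hz. apply Rabs_def2 in Hz.
      pose proof (Pinc (c0 - 1/2) z ltac:(lra)). pose proof (Pinc z (c0 + 1/2) ltac:(lra)).
      pose proof (HPer (c0 - 1/2)). assert (E : c0 - 1/2 + 1 = c0 + 1/2) by lra. rewrite E in H1. lra. }
    pose proof (deriv_const_loc P c0 (P (c0 - 1/2)) (1/2) ltac:(lra) Hcst).
    pose proof (uniqueness_limite P c0 _ _ (dP c0) H). lra. }
  exists (fun x => P x / I), I. split; [auto|split;[|split]].
  - apply (CkS_intro _ _ (fun x => psi x / I)).
    + intro x. unfold Rdiv. apply (derivable_pt_lim_scal_right P). apply dP.
    + unfold Rdiv. apply (Ck_mult k psi (fun _ => / I)); auto. apply Ck_const.
  - intro x. unfold Rdiv. apply (derivable_pt_lim_scal_right P). apply dP.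
  - intro x. simpl. rewrite HPer. field. lra.
Qed.

Lemma iter_deg H : degree_one H -> forall k, degree_one (Nat.iter k H).
Proof.
  intros Hd k. induction k; intro x; simpl; auto. rewrite IHk. apply Hd.
Qed.

Lemma iter_mono H : nondecreasing H -> forall k, nondecreasing (Nat.iter k H).
Proof.
  intros Hn k. induction k; intros x y Hxy; simpl; auto.
Qed.

Lemma osc H : nondecreasing H -> degree_one H -> forall k x y,
  Rabs ((Nat.iter k H x - x) - (Nat.iter k H y - y)) <= 1.
Proof.
  intros Hn Hd k x y. destruct (int_shift x y) as [j Hj].
  assert (E : Nat.iter k H (y + IZR j) = Nat.iter k H y + IZR j) by (apply deg_Z, iter_deg; auto).
  pose proof (iter_mono H Hn k x (y + IZR j) ltac:(lra)).
  pose proof (iter_mono H Hn k (y + IZR j) (x + 1) ltac:(lra)).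
  rewrite (iter_deg H Hd k x) in H1.
  apply Rabs_le. lra.
Qed.

Lemma nat_large x : exists N : nat, x < INR N.
Proof. destruct (INR_unbounded x) as [N HN]. exists N. lra. Qed.

Lemma inv_INR_nonneg k : 0 <= / INR k.
Proof.
  destruct k. simpl. rewrite Rinv_0. lra.
  left. apply Rinv_0_lt_compat. apply lt_0_INR. lia.
Qed.

Section Rot.
Variable H : R -> R.
Hypothesis Hn : nondecreasing H.
Hypothesis Hd : degree_one H.

Let a k := Nat.iter k H 0.

Lemma a_add j k : Rabs (a (j + k) - a j - a k) <= 1.
Proof.
  unfold a. rewrite Nat.iter_add. pose proof (osc H Hn Hd j (Nat.iter k H 0) 0).
  replace (Nat.iter j H (Nat.iter k H 0) - Nat.iter j H 0 - Nat.iter k H 0) with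
   ((Nat.iter j H (Nat.iter k H 0) - Nat.iter k H 0) - (Nat.iter j H 0 - 0)) by ring. auto.
Qed.

Let B := Rabs (a 1) + 1.

Lemma a_bound k : Rabs (a k) <= INR k * B.
Proof.
  induction k.
  - unfold a. simpl. rewrite Rabs_R0; lra.
  - pose proof (a_add 1 k). rewrite S_INR. replace (S k) with (1 + k)%nat by lia.
    apply Rabs_le. apply Rabs_def2b in H0. apply Rabs_def2b in IHk.
    pose proof (Rabs_def2b (a 1) (Rabs (a 1)) (Rle_refl _)). unfold B in *. lra.
Qed.

Lemma a_mult k m : Rabs (a (k * m) - INR k * a m) <= INR k.
Proof.
  induction k.
  - unfold a. simpl. rewrite Rmult_0_l, Rminus_0_r, Rabs_R0; lra.
  - replace (S k * m)%nat with (m + k * m)%nat by lia. pose proof (a_add m (k * m)).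
    rewrite S_INR. apply Rabs_def2b in H0. apply Rabs_def2b in IHk. apply Rabs_le. lra.
Qed.

Lemma a_est n m : (1 <= n)%nat -> (1 <= m)%nat ->
  Rabs (a n / INR n - a m / INR m) <= 1 / INR m + (1 + 2 * INR m * B) / INR n.
Proof.
  intros Hn1 Hm1.
  assert (Hm0 : m <> 0%nat) by lia.
  pose proof (Nat.div_mod n m Hm0) as Hdm. pose proof (Nat.mod_upper_bound n m Hm0) as Hr.
  set (kq := (n / m)%nat) in *. set (r := (n mod m)%nat) in *.
  assert (HA : Rabs (a n - a (kq * m) - a r) <= 1).
  { replace n with (kq * m + r)%nat by lia. apply a_add. }
  pose proof (a_mult kq m) as HBm. pose proof (a_bound r) as Har. pose proof (a_bound m) as Ham.
  assert (HN : INR n = INR m * INR kq + INR r).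
  { rewrite Hdm at 1. rewrite plus_INR, mult_INR. auto. }
  assert (Hrm : INR r <= INR m) by (apply le_INR; lia).
  assert (Hm : 1 <= INR m) by (apply (le_INR 1); lia).
  assert (Hnn : 1 <= INR n) by (apply (le_INR 1); lia).
  assert (Hr0 : 0 <= INR r) by apply pos_INR.
  assert (Hk0 : 0 <= INR kq) by apply pos_INR.
  assert (HB : 0 < B) by (unfold B; pose proof (Rabs_pos (a 1)); lra).
  set (X := a n * INR m - a m * INR n).
  assert (EX : X = INR m * (a n - a (kq * m) - a r) + INR m * (a (kq * m) - INR kq * a m)
                   + INR m * a r - a m * INR r).
  { unfold X. rewrite HN. ring. }
  assert (HX : Rabs X <= INR m + INR n + 2 * INR m * INR m * B).
  { rewrite EX.
    apply Rabs_def2b in HA. apply Rabs_def2b in HBm. apply Rabs_def2b in Har. apply Rabs_def2b in Ham.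
    apply Rabs_le. split; nra. }
  replace (a n / INR n - a m / INR m) with (X / (INR n * INR m)) by (unfold X; field; lra).
  unfold Rdiv. rewrite Rabs_mult, Rabs_inv, Rabs_mult, (Rabs_right (INR n)), (Rabs_right (INR m)) by lra.
  apply (Rmult_le_reg_r (INR n * INR m)). nra.
  rewrite Rmult_assoc, Rinv_l by nra. rewrite Rmult_1_r.
  replace ((1 * / INR m + (1 + 2 * INR m * B) * / INR n) * (INR n * INR m))
    with (INR n + INR m + 2 * INR m * INR m * B) by (field; lra). lra.
Qed.

Lemma rot_exists : exists r, rotation_number H r.
Proof.
  set (u := fun k => a (S k) / INR (S k)).
  assert (HB : 0 < B) by (unfold B; pose proof (Rabs_pos (a 1)); lra).
  assert (Hc : Cauchy_crit u).
  { intros eps He.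
    destruct (nat_large (4 / eps)) as [M HM].
    set (m := S M).
    assert (Hm : 4 / eps < INR m) by (unfold m; rewrite S_INR; lra).
    destruct (nat_large (4 * (1 + 2 * INR m * B) / eps)) as [N HN].
    exists N. intros k1 k2 Hk1 Hk2. unfold R_dist, u.
    assert (Hm1 : 1 / INR m < eps / 4).
    { assert (Hm' : 4 < INR m * eps).
      { replace 4 with (4/eps*eps) by (field; lra). apply Rmult_lt_compat_r; lra. }
      assert (0 < INR m) by (pose proof (pos_INR M); unfold m; rewrite S_INR; lra).
      unfold Rdiv. rewrite Rmult_1_l. apply (Rmult_lt_reg_r (INR m)); [lra|]. rewrite Rinv_l by lra. nra. }
    assert (Hk : forall k, (k >= N)%nat -> (1 + 2 * INR m * B) / INR (S k) < eps / 4).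
    { intros k Hk. assert (INR N <= INR k) by (apply le_INR; lia). rewrite S_INR.
      assert (0 < 1 + 2 * INR m * B). { pose proof (pos_INR m). nra. }
      apply (Rmult_lt_reg_r (INR k + 1)). pose proof (pos_INR k); lra.
      unfold Rdiv. rewrite Rmult_assoc, Rinv_l, Rmult_1_r by (pose proof (pos_INR k); lra).
      apply (Rmult_lt_reg_r (4 / eps)). apply Rdiv_lt_0_compat; lra.
      replace (eps * / 4 * (INR k + 1) * (4 / eps)) with (INR k + 1) by (field; lra).
      unfold Rdiv in HN. lra. }
    pose proof (a_est (S k1) m ltac:(lia) ltac:(unfold m; lia)).
    pose proof (a_est (S k2) m ltac:(lia) ltac:(unfold m; lia)).
    pose proof (Hk k1 Hk1). pose proof (Hk k2 Hk2).
    replace (a (S k1) / INR (S k1) - a (S k2) / INR (S k2)) with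
      ((a (S k1) / INR (S k1) - a m / INR m) - (a (S k2) / INR (S k2) - a m / INR m)) by ring.
    eapply Rle_lt_trans. apply Rabs_triang. rewrite Rabs_Ropp. lra. }
  destruct (Rcomplete.R_complete u Hc) as [l Hl]. exists l.
  intros x eps He.
  destruct (Hl (eps / 2) ltac:(lra)) as [N1 HN1].
  destruct (nat_large (2 * (Rabs x + 1) / eps)) as [N2 HN2].
  exists (S (N1 + N2)). intros k Hk. destruct k as [|k]; [lia|].
  specialize (HN1 k ltac:(lia)). unfold R_dist, u in *.
  pose proof (osc H Hn Hd (S k) x 0) as Ho. fold (a (S k)) in Ho.
  assert (Hpos : 0 < INR (S k)) by (apply lt_0_INR; lia).
  assert (HN2' : INR N2 <= INR (S k)) by (apply le_INR; lia).
  assert (Hb : Rabs (Nat.iter (S k) H x - a (S k)) <= Rabs x + 1).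
  { replace (Nat.iter (S k) H x - a (S k)) with ((Nat.iter (S k) H x - x - (a (S k) - 0)) + x) by ring.
    eapply Rle_trans. apply Rabs_triang. lra. }
  replace (Nat.iter (S k) H x / INR (S k) - l) with
    ((Nat.iter (S k) H x - a (S k)) / INR (S k) + (a (S k) / INR (S k) - l)) by (field; lra).
  eapply Rle_lt_trans. apply Rabs_triang.
  assert (Rabs ((Nat.iter (S k) H x - a (S k)) / INR (S k)) < eps / 2).
  { unfold Rdiv. rewrite Rabs_mult, Rabs_inv, (Rabs_right (INR (S k))) by lra.
    apply (Rmult_lt_reg_r (INR (S k))); auto. rewrite Rmult_assoc, Rinv_l, Rmult_1_r by lra.
    assert (2 * (Rabs x + 1) < eps * INR (S k)).
    { apply (Rmult_lt_reg_r (/ eps)). apply Rinv_0_lt_compat; lra.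
      replace (eps * INR (S k) * / eps) with (INR (S k)) by (field; lra). unfold Rdiv in HN2. lra. }
    lra. }
  lra.
Qed.

Lemma iter_qk q (p : Z) x0 : Nat.iter q H x0 <= x0 + IZR p ->
  forall k, Nat.iter (q * k) H x0 <= x0 + INR k * IZR p.
Proof.
  intros Hq k. induction k.
  - rewrite Nat.mul_0_r. simpl. lra.
  - rewrite Nat.mul_succ_r, Nat.add_comm, Nat.iter_add.
    pose proof (iter_mono H Hn q _ _ IHk).
    rewrite INR_IZR_INZ, <- mult_IZR in H0. rewrite (deg_Z _ (iter_deg H Hd q)) in H0.
    rewrite mult_IZR, <- INR_IZR_INZ in H0. rewrite S_INR. lra.
Qed.

Lemma iter_qk' q (p : Z) x0 : x0 + IZR p <= Nat.iter q H x0 ->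
  forall k, x0 + INR k * IZR p <= Nat.iter (q * k) H x0.
Proof.
  intros Hq k. induction k.
  - rewrite Nat.mul_0_r. simpl. lra.
  - rewrite Nat.mul_succ_r, Nat.add_comm, Nat.iter_add.
    pose proof (iter_mono H Hn q _ _ IHk).
    rewrite INR_IZR_INZ, <- mult_IZR in H0. rewrite (deg_Z _ (iter_deg H Hd q)) in H0.
    rewrite mult_IZR, <- INR_IZR_INZ in H0. rewrite S_INR. lra.
Qed.

Lemma rot_le_pq r q (p : Z) x0 : rotation_number H r -> (1 <= q)%nat ->
  Nat.iter q H x0 <= x0 + IZR p -> r <= IZR p / INR q.
Proof.
  intros Hr Hq Hit. destruct (Rle_lt_dec r (IZR p / INR q)) as [|Hlt]; auto. exfalso.
  set (eps := (r - IZR p / INR q) / 2).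
  assert (He : eps > 0) by (unfold eps; lra).
  destruct (Hr x0 eps He) as [N HN].
  destruct (nat_large (Rabs x0 / eps)) as [K0 HK0].
  set (K := S (N + K0)).
  assert (HqR : 1 <= INR q) by (apply (le_INR 1); auto).
  assert (HKR : INR K0 < INR K) by (apply lt_INR; unfold K; lia).
  pose proof (pos_INR K0).
  specialize (HN (q * K)%nat ltac:(unfold K; nia)). unfold R_dist in HN.
  pose proof (iter_qk q p x0 Hit K) as Hb.
  rewrite mult_INR in HN.
  assert (HK : 0 < INR K) by lra.
  assert (Hx : x0 / (INR q * INR K) < eps).
  { apply (Rle_lt_trans _ (Rabs x0 / INR K)).
    - unfold Rdiv. destruct (Rle_dec 0 x0).
      + rewrite Rabs_right by lra. apply Rmult_le_compat_l; auto.
        apply Rinv_le_contravar; nra.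
      + assert (x0 * / (INR q * INR K) <= 0).
        { assert (0 < / (INR q * INR K)) by (apply Rinv_0_lt_compat; nra). nra. }
        assert (0 <= Rabs x0 * / INR K) by (apply Rmult_le_pos; [apply Rabs_pos| left; apply Rinv_0_lt_compat; lra]).
        lra.
    - apply (Rmult_lt_reg_r (INR K)); auto. unfold Rdiv. rewrite Rmult_assoc, Rinv_l, Rmult_1_r by lra.
      apply (Rmult_lt_reg_r (/ eps)). apply Rinv_0_lt_compat; lra.
      replace (eps * INR K * / eps) with (INR K) by (field; lra). unfold Rdiv in HK0. lra. }
  assert (Nat.iter (q * K) H x0 / (INR q * INR K) <= x0 / (INR q * INR K) + IZR p / INR q).
  { replace (x0 / (INR q * INR K) + IZR p / INR q) with ((x0 + INR K * IZR p) / (INR q * INR K)) by (field; lra).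
    unfold Rdiv. apply Rmult_le_compat_r; auto. left; apply Rinv_0_lt_compat; nra. }
  apply Rabs_def2 in HN. unfold eps in *. lra.
Qed.

Lemma rot_ge_pq r q (p : Z) x0 : rotation_number H r -> (1 <= q)%nat ->
  x0 + IZR p <= Nat.iter q H x0 -> IZR p / INR q <= r.
Proof.
  intros Hr Hq Hit. destruct (Rle_lt_dec (IZR p / INR q) r) as [|Hlt]; auto. exfalso.
  set (eps := (IZR p / INR q - r) / 2).
  assert (He : eps > 0) by (unfold eps; lra).
  destruct (Hr x0 eps He) as [N HN].
  destruct (nat_large (Rabs x0 / eps)) as [K0 HK0].
  set (K := S (N + K0)).
  assert (HqR : 1 <= INR q) by (apply (le_INR 1); auto).
  assert (HKR : INR K0 < INR K) by (apply lt_INR; unfold K; lia).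
  pose proof (pos_INR K0).
  specialize (HN (q * K)%nat ltac:(unfold K; nia)). unfold R_dist in HN.
  pose proof (iter_qk' q p x0 Hit K) as Hb.
  rewrite mult_INR in HN.
  assert (HK : 0 < INR K) by lra.
  assert (Hx : - eps < x0 / (INR q * INR K)).
  { apply (Rlt_le_trans _ (- (Rabs x0 / INR K))).
    - apply Ropp_lt_contravar. apply (Rmult_lt_reg_r (INR K)); auto. unfold Rdiv. rewrite Rmult_assoc, Rinv_l, Rmult_1_r by lra.
      apply (Rmult_lt_reg_r (/ eps)). apply Rinv_0_lt_compat; lra.
      replace (eps * INR K * / eps) with (INR K) by (field; lra). unfold Rdiv in HK0. lra.
    - unfold Rdiv. destruct (Rle_dec 0 x0).
      + assert (0 <= x0 * / (INR q * INR K)).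
        { apply Rmult_le_pos; auto. left; apply Rinv_0_lt_compat; nra. }
        assert (0 <= Rabs x0 * / INR K) by (apply Rmult_le_pos; [apply Rabs_pos| left; apply Rinv_0_lt_compat; lra]).
        lra.
      + rewrite Rabs_left by lra. rewrite <- Ropp_mult_distr_l, Ropp_involutive.
        apply Rmult_le_compat_neg_l. lra. apply Rinv_le_contravar; nra. }
  assert (x0 / (INR q * INR K) + IZR p / INR q <= Nat.iter (q * K) H x0 / (INR q * INR K)).
  { replace (x0 / (INR q * INR K) + IZR p / INR q) with ((x0 + INR K * IZR p) / (INR q * INR K)) by (field; lra).
    unfold Rdiv. apply Rmult_le_compat_r; auto. left; apply Rinv_0_lt_compat; nra. }
  apply Rabs_def2 in HN. unfold eps in *. lra.
Qed.

End Rot.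

Lemma rot_mono H1 H2 r1 r2 : nondecreasing H1 -> (forall x, H1 x <= H2 x) ->
  rotation_number H1 r1 -> rotation_number H2 r2 -> r1 <= r2.
Proof.
  intros Hn Hle R1 R2.
  eapply Rle_cv_lim; [|apply (R1 0)|apply (R2 0)].
  intro k. simpl. unfold Rdiv. apply Rmult_le_compat_r. apply inv_INR_nonneg.
  clear R1 R2. induction k; simpl; [lra|].
  eapply Rle_trans. apply Hn. exact IHk. apply Hle.
Qed.

Lemma perturb_lower (K : R -> R) x0 : continuity K -> nondecreasing K ->
  forall j eps, 0 < eps -> exists eta, 0 < eta /\ forall H, (forall y, K y - eta <= H y) ->
    Nat.iter j K x0 - eps <= Nat.iter j H x0.
Proof.
  intros Hc Hn j. induction j; intros eps He.
  - exists 1. split; [lra|]. intros. simpl. lra.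
  - destruct (cont_eps K (Nat.iter j K x0) (Hc _) (eps / 2) ltac:(lra)) as [d [Hd Hdd]].
    destruct (IHj (d / 2) ltac:(lra)) as [e1 [He1 Hj]].
    exists (Rmin e1 (eps / 2)). split. apply Rmin_pos; lra.
    intros H HH. simpl.
    assert (Hy : Nat.iter j K x0 - d / 2 <= Nat.iter j H x0).
    { apply Hj. intro y. specialize (HH y). pose proof (Rmin_l e1 (eps/2)). lra. }
    specialize (HH (Nat.iter j H x0)). pose proof (Rmin_r e1 (eps/2)).
    assert (K (Nat.iter j K x0) - eps / 2 <= K (Nat.iter j H x0)).
    { destruct (Rle_dec (Nat.iter j K x0) (Nat.iter j H x0)).
      - pose proof (Hn _ _ r). lra.
      - assert (Hab : Rabs (Nat.iter j H x0 - Nat.iter j K x0) < d) by (apply Rabs_def1; lra).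
        specialize (Hdd _ Hab). apply Rabs_def2 in Hdd. lra. }
    lra.
Qed.

Lemma perturb_upper (K : R -> R) x0 : continuity K -> nondecreasing K ->
  forall j eps, 0 < eps -> exists eta, 0 < eta /\ forall H, (forall y, H y <= K y + eta) ->
    Nat.iter j H x0 <= Nat.iter j K x0 + eps.
Proof.
  intros Hc Hn j. induction j; intros eps He.
  - exists 1. split; [lra|]. intros. simpl. lra.
  - destruct (cont_eps K (Nat.iter j K x0) (Hc _) (eps / 2) ltac:(lra)) as [d [Hd Hdd]].
    destruct (IHj (d / 2) ltac:(lra)) as [e1 [He1 Hj]].
    exists (Rmin e1 (eps / 2)). split. apply Rmin_pos; lra.
    intros H HH. simpl.
    assert (Hy : Nat.iter j H x0 <= Nat.iter j K x0 + d / 2).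
    { apply Hj. intro y. specialize (HH y). pose proof (Rmin_l e1 (eps/2)). lra. }
    specialize (HH (Nat.iter j H x0)). pose proof (Rmin_r e1 (eps/2)).
    assert (K (Nat.iter j H x0) <= K (Nat.iter j K x0) + eps / 2).
    { destruct (Rle_dec (Nat.iter j H x0) (Nat.iter j K x0)).
      - pose proof (Hn _ _ r). lra.
      - assert (Hab : Rabs (Nat.iter j H x0 - Nat.iter j K x0) < d) by (apply Rabs_def1; lra).
        specialize (Hdd _ Hab). apply Rabs_def2 in Hdd. lra. }
    lra.
Qed.

Lemma rat_between r1 r2 : r1 < r2 -> exists (q : nat) (p : Z), (1 <= q)%nat /\ r1 < IZR p / INR q < r2.
Proof.
  intro H. destruct (nat_large (1 / (r2 - r1))) as [Q HQ].
  exists (S Q), (up (r1 * INR (S Q))). split; [lia|].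
  destruct (archimed (r1 * INR (S Q))) as [H1 H2].
  assert (Hq : 0 < INR (S Q)) by (apply lt_0_INR; lia).
  assert (HQ' : INR Q < INR (S Q)) by (apply lt_INR; lia).
  split.
  - apply (Rmult_lt_reg_r (INR (S Q))); auto. unfold Rdiv. rewrite Rmult_assoc, Rinv_l, Rmult_1_r by lra. lra.
  - apply (Rmult_lt_reg_r (INR (S Q))); auto. unfold Rdiv. rewrite Rmult_assoc, Rinv_l, Rmult_1_r by lra.
    assert (1 < (r2 - r1) * INR (S Q)).
    { apply (Rmult_lt_reg_r (/ (r2 - r1))). apply Rinv_0_lt_compat; lra.
      replace ((r2 - r1) * INR (S Q) * / (r2 - r1)) with (INR (S Q)) by (field; lra). unfold Rdiv in HQ. lra. }
    lra.
Qed.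

Section IVT.
Variable G : R -> R.
Hypothesis Gc : continuity G.
Hypothesis Gn : nondecreasing G.
Hypothesis Gd : degree_one G.

Let Gt (t : R) := fun x => G x + t.

Lemma Gt_n t : nondecreasing (Gt t).
Proof. intros x y H. unfold Gt. pose proof (Gn x y H). lra. Qed.
Lemma Gt_d t : degree_one (Gt t).
Proof. intro x. unfold Gt. rewrite Gd. ring. Qed.
Lemma Gt_c t : continuity (Gt t).
Proof. intro x. apply continuity_pt_plus. apply Gc. apply continuity_pt_const. intros ? ?; reflexivity. Qed.

Lemma rot_ivt lo hi r : lo <= hi ->
  (forall rr, rotation_number (Gt lo) rr -> rr <= r) ->
  (forall rr, rotation_number (Gt hi) rr -> r <= rr) ->
  exists t, lo <= t <= hi /\ rotation_number (Gt t) r.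
Proof.
  intros Hlh Hlo Hhi.
  set (E := fun t => lo <= t <= hi /\ forall rr, rotation_number (Gt t) rr -> rr <= r).
  assert (HE : bound E) by (exists hi; intros t [Ht _]; lra).
  assert (HElo : exists t, E t) by (exists lo; split; [lra|auto]).
  destruct (completeness E HE HElo) as [ts [Hub Hlub]].
  assert (Hts : lo <= ts <= hi).
  { split. apply Hub. split; [lra|auto]. apply Hlub. intros t [Ht _]; lra. }
  exists ts. split; auto.
  destruct (rot_exists (Gt ts) (Gt_n ts) (Gt_d ts)) as [rs Hrs].
  destruct (Rtotal_order rs r) as [Hlt|[Heq|Hgt]].
  - exfalso.
    assert (Hts2 : ts < hi).
    { destruct (Rle_lt_dec hi ts); auto. assert (ts = hi) by lra. subst ts.
      specialize (Hhi rs Hrs). lra. }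
    destruct (rat_between rs r Hlt) as [q [p [Hq [Hp1 Hp2]]]].
    assert (Hit : Nat.iter q (Gt ts) 0 < 0 + IZR p).
    { destruct (Rlt_le_dec (Nat.iter q (Gt ts) 0) (0 + IZR p)) as [|Hge]; auto.
      pose proof (rot_ge_pq (Gt ts) (Gt_n ts) (Gt_d ts) rs q p 0 Hrs Hq Hge). lra. }
    destruct (perturb_upper (Gt ts) 0 (Gt_c ts) (Gt_n ts) q ((0 + IZR p - Nat.iter q (Gt ts) 0) / 2) ltac:(lra))
      as [eta [Heta Hpert]].
    set (t' := Rmin (ts + eta) hi).
    assert (Ht' : ts < t' <= hi) by (unfold t'; apply Rmin_case_strong; intros; lra).
    assert (Hit' : Nat.iter q (Gt t') 0 <= 0 + IZR p).
    { pose proof (Hpert (Gt t')) as HH. assert (Nat.iter q (Gt t') 0 <= Nat.iter q (Gt ts) 0 + (0 + IZR p - Nat.iter q (Gt ts) 0) / 2); [|lra].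
      apply HH. intro y. unfold Gt. assert (t' <= ts + eta) by apply Rmin_l. lra. }
    assert (E t').
    { split; [lra|]. intros rr Hrr. pose proof (rot_le_pq (Gt t') (Gt_n t') (Gt_d t') rr q p 0 Hrr Hq Hit'). lra. }
    pose proof (Hub t' H). lra.
  - subst rs. auto.
  - exfalso.
    assert (Hts1 : lo < ts).
    { destruct (Rle_lt_dec ts lo); auto. assert (ts = lo) by lra. subst ts.
      specialize (Hlo rs Hrs). lra. }
    destruct (rat_between r rs Hgt) as [q [p [Hq [Hp1 Hp2]]]].
    assert (Hit : 0 + IZR p < Nat.iter q (Gt ts) 0).
    { destruct (Rlt_le_dec (0 + IZR p) (Nat.iter q (Gt ts) 0)) as [|Hge]; auto.
      pose proof (rot_le_pq (Gt ts) (Gt_n ts) (Gt_d ts) rs q p 0 Hrs Hq Hge). lra. }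
    destruct (perturb_lower (Gt ts) 0 (Gt_c ts) (Gt_n ts) q ((Nat.iter q (Gt ts) 0 - (0 + IZR p)) / 2) ltac:(lra))
      as [eta [Heta Hpert]].
    set (t' := Rmax (ts - eta) lo).
    assert (Ht' : lo <= t' < ts) by (unfold t'; apply Rmax_case_strong; intros; lra).
    assert (Hit' : 0 + IZR p <= Nat.iter q (Gt t') 0).
    { pose proof (Hpert (Gt t')) as HH. assert (Nat.iter q (Gt ts) 0 - (Nat.iter q (Gt ts) 0 - (0 + IZR p)) / 2 <= Nat.iter q (Gt t') 0); [|lra].
      apply HH. intro y. unfold Gt. assert (ts - eta <= t') by apply Rmax_l. lra. }
    assert (exists e, E e /\ t' < e).
    { apply NNPP. intro Hno. assert (is_upper_bound E t').
      { intros e He. destruct (Rle_lt_dec e t'); auto. exfalso. apply Hno. exists e; auto. }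
      pose proof (Hlub t' H). lra. }
    destruct H as [e [[He1 He2] Hte]].
    destruct (rot_exists (Gt t') (Gt_n t') (Gt_d t')) as [r1 Hr1].
    destruct (rot_exists (Gt e) (Gt_n e) (Gt_d e)) as [r2 Hr2].
    pose proof (rot_ge_pq (Gt t') (Gt_n t') (Gt_d t') r1 q p 0 Hr1 Hq Hit').
    pose proof (rot_mono (Gt t') (Gt e) r1 r2 (Gt_n t')) as Hm.
    assert (r1 <= r2). { apply Hm; auto. intro x; unfold Gt; lra. }
    specialize (He2 r2 Hr2). lra.
Qed.

End IVT.

Lemma rot_fixed0 H : nondecreasing H -> degree_one H -> H 0 = 0 -> rotation_number H 0.
Proof.
  intros Hn Hd H0. destruct (rot_exists H Hn Hd) as [r Hr].
  pose proof (rot_le_pq H Hn Hd r 1 0 0 Hr (le_n 1)) as A1.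
  pose proof (rot_ge_pq H Hn Hd r 1 0 0 Hr (le_n 1)) as A2.
  simpl in A1, A2. rewrite H0 in A1, A2.
  assert (r = 0). { unfold Rdiv in *. rewrite Rmult_0_l in A1, A2. apply Rle_antisym; [apply A1|apply A2]; lra. }
  subst; auto.
Qed.

Lemma Z_small (k : Z) : -1 < IZR k < 1 -> k = 0%Z.
Proof.
  intros [H1 H2]. apply lt_IZR in H1. apply lt_IZR in H2. lia.
Qed.

Lemma gap_exists n a b eps : 0 < eps < 1/4 -> a < b -> b - a > 2 * eps / 2 ^ n ->
  exists p q, a < p < q /\ q < b /\ forall x, flat_set n a b eps x <-> (a < x <= p \/ q <= x < b).
Proof.
  intros Heps Hab Hba.
  assert (H2 : 1 <= 2 ^ n) by (apply pow_R1_Rle; lra).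
  set (e := eps / 2 ^ n).
  assert (He : 0 < e) by (unfold e; apply Rdiv_lt_0_compat; lra).
  assert (E2 : 2 * eps / 2 ^ n = 2 * e) by (unfold e; field; lra).
  rewrite E2 in Hba. unfold flat_set. rewrite E2. fold e.
  destruct (Nat.even n).
  - exists (b - 2 * e), (b - e). repeat split; try lra; intros; lra.
  - exists (a + e), (a + 2 * e). repeat split; try lra; intros; lra.
Qed.

Theorem lemma2p2 (n : nat) (F : R -> R) (DF : nat -> R -> R) (a b : R) :
  (1 <= n)%nat ->
  Cn_with n F DF -> nondecreasing F -> degree_one F -> normalized_lift F ->
  a < b ->
  (forall (m : nat) (x : R), (1 <= m <= n)%nat -> a < x < b -> DF m x = 0) ->
  forall eps delta : R,
    0 < eps < 1/4 -> 0 < delta < 1 -> b - a > 2 * eps / 2 ^ n ->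
    exists (Ft : R -> R) (DFt : nat -> R -> R),
      Cn_with n Ft DFt /\ nondecreasing Ft /\ degree_one Ft /\ normalized_lift Ft /\
      (* (1) C^n distance < delta *)
      (exists c, c < delta /\
         forall (i : nat) (x : R), (i <= n)%nat -> Rabs (DFt i x - DF i x) <= c) /\
      (* (2) same rotation number *)
      (exists r, rotation_number F r /\ rotation_number Ft r) /\
      (* (3) relative C^1 closeness away from the enlarged interval (on the circle) *)
      (forall x : R,
         (forall k : Z, ~ (a - (b - a) / 4 < x + IZR k < b + (b - a) / 4)) ->
         Rabs (DFt 1%nat x - DF 1%nat x) < delta * DF 1%nat x \/
         (DF 1%nat x = 0 /\ DFt 1%nat x = 0)) /\
      (* (4) flat set inside (a,b) *)
      (forall x : R, a < x < b ->
         ((forall m : nat, (1 <= m <= n)%nat -> DFt m x = 0) <-> flat_set n a b eps x)).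
Proof.
  intros Hn1 HC Hnd Hdeg Hnorm Hab Hflat eps delta Heps Hdel Hba.
  destruct (gap_exists n a b eps Heps Hab Hba) as [p [q [Hpq [Hqb Hflatiff]]]].
  destruct n as [|n']; [lia|]. clear Hn1.
  set (N := S n') in *.
  assert (dF : forall x, derivable_pt_lim F x (DF 1%nat x)) by (apply (Cn_d1 n'); auto).
  assert (Fc : continuity F).
  { rewrite <- (Cn_D0 _ _ _ HC). apply (Cn_cont _ _ _ HC). lia. }
  assert (DF1c : continuity (DF 1%nat)) by (apply (Cn_cont _ _ _ HC); unfold N; lia).
  assert (DF1nn : forall x, 0 <= DF 1%nat x) by (apply (deriv_nonneg_of_incr F); auto).
  assert (DF1per : forall x, DF 1%nat (x + 1) = DF 1%nat x).
  { intro x. apply (Cn_shift N F DF 1 HC Hdeg). unfold N; lia. }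
  assert (Hx1 : exists x1, 0 < DF 1%nat x1).
  { apply NNPP. intro Hno.
    assert (Hz : forall x, DF 1%nat x = 0).
    { intro x. destruct (DF1nn x) as [Hp|Hp]; auto. exfalso. apply Hno. exists x; auto. }
    pose proof (deriv_zero_const F (DF 1%nat) 0 1 dF (fun x _ => Hz x) 1 ltac:(lra)).
    pose proof (Hdeg 0). rewrite Rplus_0_l in H0. lra. }
  destruct Hx1 as [x1 Hx1].
  assert (Fconst : forall x, a <= x <= b -> F x = F a).
  { apply (deriv_zero_const F (DF 1%nat) a b dF). intros x Hx. apply Hflat; auto. unfold N; lia. }
  assert (Hba1 : b - a < 1).
  { destruct (Rlt_le_dec (b - a) 1); auto. exfalso.
    pose proof (Fconst (a + 1) ltac:(lra)). rewrite Hdeg in H. lra. }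
  set (mg := (p + q) / 2). set (wg := q - p).
  assert (Hwg : 0 < wg < 1) by (unfold wg; lra).
  set (psig := bump n' mg wg).
  assert (psig_in : forall x, a < x < b -> 0 < psig x -> p < x < q).
  { intros x Hx Hpos. destruct (bump_supp n' mg wg x Hwg Hpos) as [k Hk].
    apply Rabs_def2 in Hk. unfold mg, wg in Hk.
    assert (k = 0%Z) by (apply Z_small; split; lra). subst k. simpl in Hk. lra. }
  assert (psig_pos : forall x, p < x < q -> 0 < psig x).
  { intros x Hx. apply bump_pos; auto. apply Rabs_def1; unfold mg, wg; lra. }
  destruct (staircase n' psig (bump_Ck n' mg wg) (bump_nonneg n' mg wg) (bump_per n' mg wg))
    as [Sg [Ig [HIg [CkSg [dSg Sgper]]]]].
  { exists mg. apply psig_pos. unfold mg; split; lra. }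
  (* compensation bump *)
  set (kap := DF 1%nat x1 / 2).
  destruct (cont_eps (DF 1%nat) x1 (DF1c x1) kap ltac:(unfold kap; lra)) as [r0 [Hr0 Hr0x]].
  set (wc := Rmin r0 (1/2)).
  assert (Hwc : 0 < wc < 1) by (unfold wc; split; [apply Rmin_pos; lra| pose proof (Rmin_r r0 (1/2)); lra]).
  set (psic := bump n' x1 wc).
  assert (psic_big : forall y, 0 < psic y -> kap < DF 1%nat y).
  { intros y Hy. destruct (bump_supp n' x1 wc y Hwc Hy) as [k Hk].
    rewrite <- (per_Z (DF 1%nat) DF1per k y).
    assert (Hw : wc <= r0) by apply Rmin_l.
    assert (Rabs (y + IZR k - x1) < r0) by lra.
    specialize (Hr0x _ H). apply Rabs_def2 in Hr0x. unfold kap in *. lra. }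
  assert (psic_zero : forall y, DF 1%nat y <= kap -> psic y = 0).
  { intros y Hy. destruct (bump_nonneg n' x1 wc y) as [Hp|Hp]; auto.
    specialize (psic_big y Hp). lra. }
  destruct (staircase n' psic (bump_Ck n' x1 wc) (bump_nonneg n' x1 wc) (bump_per n' x1 wc))
    as [Sc [Ic [HIc [CkSc [dSc Scper]]]]].
  { exists x1. apply bump_pos; auto. rewrite Rminus_diag, Rabs_R0. lra. }
  destruct CkSg as [DSg HSg]. destruct CkSc as [DSc HSc].
  assert (DSg1 : forall x, DSg 1%nat x = psig x / Ig).
  { intro x. apply (uniqueness_limite Sg x). apply (Cn_d1 n'); auto. auto. }
  assert (DSc1 : forall x, DSc 1%nat x = psic x / Ic).
  { intro x. apply (uniqueness_limite Sc x). apply (Cn_d1 n'); auto. auto. }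
  assert (DSc0ab : forall m x, (1 <= m <= N)%nat -> a < x < b -> DSc m x = 0).
  { apply (Cn_zero_open N Sc DSc a b HSc). intros x Hx. rewrite DSc1, psic_zero. unfold Rdiv; ring.
    rewrite Hflat; auto. unfold kap; lra. unfold N; lia. }
  assert (DSgflat : forall m x, (1 <= m <= N)%nat -> (a < x <= p \/ q <= x < b) -> DSg m x = 0).
  { intros m x Hm Hx.
    assert (Z1 : forall x, a < x < p -> DSg m x = 0).
    { intros y0 Hy0. apply (Cn_zero_open N Sg DSg a p HSg); auto. intros y Hy. rewrite DSg1.
      destruct (bump_nonneg n' mg wg y) as [Hp|Hp].
      - specialize (psig_in y ltac:(lra) Hp). lra.
      - fold psig in Hp. rewrite <- Hp. unfold Rdiv; ring. }
    assert (Z2 : forall x, q < x < b -> DSg m x = 0).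
    { intros y0 Hy0. apply (Cn_zero_open N Sg DSg q b HSg); auto. intros y Hy. rewrite DSg1.
      destruct (bump_nonneg n' mg wg y) as [Hp|Hp].
      - specialize (psig_in y ltac:(lra) Hp). lra.
      - fold psig in Hp. rewrite <- Hp. unfold Rdiv; ring. }
    destruct Hx as [Hx|Hx].
    - destruct (Req_dec x p) as [->|Hne].
      + apply (zero_left_end (DSg m) a p); try lra; auto. apply (Cn_cont _ _ _ HSg). lia.
      + apply Z1. lra.
    - destruct (Req_dec x q) as [->|Hne].
      + apply (zero_right_end (DSg m) q b); try lra; auto. apply (Cn_cont _ _ _ HSg). lia.
      + apply Z2. lra. }
  assert (HM : exists M, 0 < M /\ forall i x, (i <= N)%nat -> Rabs (DSg i x - DSc i x) <= M).
  { apply (finite_bound (fun i x => DSg i x - DSc i x) N). intros i Hi.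
    apply bounded_periodic.
    - intro x. apply continuity_pt_minus; apply (Cn_cont N _ _ HSg i Hi) || apply (Cn_cont N _ _ HSc i Hi).
    - intro x. destruct i as [|i].
      + rewrite (Cn_D0 _ _ _ HSg), (Cn_D0 _ _ _ HSc). rewrite Sgper, Scper. ring.
      + rewrite (Cn_shift N Sg DSg 1 HSg Sgper (S i) x), (Cn_shift N Sc DSc 1 HSc Scper (S i) x); auto; lia. }
  destruct HM as [M [HM0 HM]].
  assert (HSgc0 : forall x, Rabs (Sg x - Sc x) <= M).
  { intro x. rewrite <- (Cn_D0 _ _ _ HSg), <- (Cn_D0 _ _ _ HSc). apply HM. lia. }
  assert (HP2 : 0 < 2 ^ N) by (apply pow_lt; lra).
  assert (Hlam : exists lam, 0 < lam /\ 2 * lam * M < delta /\ lam * 2 ^ N / Ic < delta * kap /\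
     (0 < F 0 -> 2 * lam * M < F 0 /\ 2 * lam * M < 1 - F 0)).
  { set (th0 := Rmin delta (delta * kap * Ic / 2 ^ N)).
    assert (Hth0 : 0 < th0).
    { unfold th0. apply Rmin_pos. lra. apply Rdiv_lt_0_compat; auto.
      apply Rmult_lt_0_compat; auto. apply Rmult_lt_0_compat. lra. unfold kap; lra. }
    assert (Hex : exists th, 0 < th /\ th <= th0 /\ (0 < F 0 -> th <= F 0 /\ th <= 1 - F 0)).
    { destruct (Rlt_le_dec 0 (F 0)) as [Hf|Hf].
      - exists (Rmin th0 (Rmin (F 0) (1 - F 0))). unfold normalized_lift in Hnorm.
        split. apply Rmin_pos; auto. apply Rmin_pos; lra.
        split. apply Rmin_l. intros _. pose proof (Rmin_r th0 (Rmin (F 0) (1 - F 0))).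
        pose proof (Rmin_l (F 0) (1 - F 0)). pose proof (Rmin_r (F 0) (1 - F 0)). lra.
      - exists th0. split; auto. split; [lra|]. intro; lra. }
    destruct Hex as [th [Hth [Hth1 Hth2]]].
    exists (th / (2 * (M + 1))).
    assert (Hl : 0 < th / (2 * (M + 1))) by (apply Rdiv_lt_0_compat; lra).
    assert (Hl2 : 2 * (th / (2 * (M + 1))) * M < th).
    { replace (2 * (th / (2 * (M + 1))) * M) with (th * (M / (M + 1))) by (field; lra).
      assert (M / (M + 1) < 1). { apply (Rmult_lt_reg_r (M + 1)). lra. unfold Rdiv. rewrite Rmult_assoc, Rinv_l; lra. }
      nra. }
    assert (Hl3 : th / (2 * (M + 1)) <= th / 2).
    { unfold Rdiv. apply Rmult_le_compat_l. lra. apply Rinv_le_contravar; lra. }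
    pose proof (Rmin_l delta (delta * kap * Ic / 2 ^ N)). pose proof (Rmin_r delta (delta * kap * Ic / 2 ^ N)).
    fold th0 in H, H0.
    split; auto. split; [lra|split].
    - assert (th / (2 * (M + 1)) < delta * kap * Ic / 2 ^ N) by lra.
      apply (Rmult_lt_reg_r (Ic / 2 ^ N)). apply Rdiv_lt_0_compat; auto.
      replace (th / (2 * (M + 1)) * 2 ^ N / Ic * (Ic / 2 ^ N)) with (th / (2 * (M + 1))) by (field; lra).
      replace (delta * kap * (Ic / 2 ^ N)) with (delta * kap * Ic / 2 ^ N) by (field; lra). auto.
    - intro Hf. destruct (Hth2 Hf). lra. }
  destruct Hlam as [lam [Hlam0 [Hlam1 [Hlam2 Hlam3]]]].
  set (Gf := fun x => F x + lam * (Sg x - Sc x)).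
  assert (Gfd : forall x, derivable_pt_lim Gf x (DF 1%nat x + lam * (psig x / Ig - psic x / Ic))).
  { intro x. unfold Gf. pose proof (deriv_lin F Sg Sc x _ _ _ lam 0 (dF x) (dSg x) (dSc x)) as HH.
    replace (fun y => F y + lam * (Sg y - Sc y)) with (fun y => F y + lam * (Sg y - Sc y) + 0); auto.
    apply functional_extensionality; intro; ring. }
  assert (Hcomp : forall x, lam * (psic x / Ic) < delta * kap).
  { intro x. assert (psic x <= 2 ^ N) by apply bump_le.
    assert (lam * (psic x / Ic) <= lam * 2 ^ N / Ic); [|lra].
    unfold Rdiv. rewrite <- Rmult_assoc. apply Rmult_le_compat_r. left; apply Rinv_0_lt_compat; auto.
    apply Rmult_le_compat_l; lra. }
  assert (Gfn : nondecreasing Gf).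
  { apply (deriv_nonneg_incr Gf _ Gfd). intro x.
    assert (0 <= lam * (psig x / Ig)).
    { apply Rmult_le_pos. lra. apply Rdiv_le_0_compat. apply bump_nonneg. auto. }
    destruct (bump_nonneg n' x1 wc x) as [Hp|Hp].
    - specialize (psic_big x Hp). specialize (Hcomp x).
      assert (delta * kap <= kap) by (unfold kap in *; nra). nra.
    - fold psic in Hp. rewrite <- Hp. unfold Rdiv. rewrite Rmult_0_l. specialize (DF1nn x). nra. }
  assert (Gfdeg : degree_one Gf).
  { intro x. unfold Gf. rewrite Hdeg, Sgper, Scper. ring. }
  assert (Gfc : continuity Gf).
  { intro x. apply derivable_continuous_pt. eexists. apply Gfd. }
  assert (Gfb : forall x, Rabs (Gf x - F x) <= lam * M).
  { intro x. unfold Gf. replace (F x + lam * (Sg x - Sc x) - F x) with (lam * (Sg x - Sc x)) by ring.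
    rewrite Rabs_mult, Rabs_right by lra. apply Rmult_le_compat_l; [lra|auto]. }
  assert (Ht : exists t r, Rabs t <= lam * M /\ 0 <= Gf 0 + t < 1 /\
            rotation_number F r /\ rotation_number (fun x => Gf x + t) r).
  { destruct Hnorm as [Hn0 Hn1]. destruct Hn0 as [Hpos|Hzero].
    - destruct (rot_exists F Hnd Hdeg) as [r Hr].
      destruct (rot_ivt Gf Gfc Gfn Gfdeg (- (lam * M)) (lam * M) r) as [t [Ht Hrt]].
      + nra.
      + intros rr Hrr. apply (rot_mono (fun x => Gf x + - (lam * M)) F rr r); auto.
        * intros x y Hxy. pose proof (Gfn x y Hxy). lra.
        * intro x. specialize (Gfb x). apply Rabs_def2b in Gfb. lra.
      + intros rr Hrr. apply (rot_mono F (fun x => Gf x + lam * M) r rr); auto.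
        intro x. specialize (Gfb x). apply Rabs_def2b in Gfb. lra.
      + exists t, r. split. apply Rabs_le; lra. split; auto.
        destruct (Hlam3 Hpos). specialize (Gfb 0). apply Rabs_def2b in Gfb. lra.
    - set (t := - (lam * (Sg 0 - Sc 0))).
      assert (HG0 : Gf 0 + t = 0) by (unfold t, Gf; rewrite <- Hzero; ring).
      exists t, 0. split. unfold t. rewrite Rabs_Ropp, Rabs_mult, Rabs_right by lra.
      apply Rmult_le_compat_l; [lra|auto]. split; [lra|]. split.
      + apply rot_fixed0; auto.
      + apply rot_fixed0; auto. intros x y Hxy. pose proof (Gfn x y Hxy). lra.
        intro x. rewrite Gfdeg. ring. }
  destruct Ht as [t [r [Ht [HGt [HrF HrG]]]]].
  exists (fun x => F x + lam * (Sg x - Sc x) + t).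
  exists (fun m x => DF m x + lam * (DSg m x - DSc m x) + (if Nat.eqb m 0 then t else 0)).
  split; [|split; [|split; [|split; [|split; [|split; [|split]]]]]].
  - apply Cn_lin; auto.
  - intros x y Hxy. pose proof (Gfn x y Hxy). unfold Gf in H. lra.
  - intro x. pose proof (Gfdeg x). unfold Gf in H. lra.
  - unfold normalized_lift. unfold Gf in HGt. exact HGt.
  - exists (2 * lam * M). split; auto. intros i x Hi.
    specialize (HM i x Hi).
    replace (DF i x + lam * (DSg i x - DSc i x) + (if (i =? 0)%nat then t else 0) - DF i x)
      with (lam * (DSg i x - DSc i x) + (if (i =? 0)%nat then t else 0)) by ring.
    eapply Rle_trans. apply Rabs_triang. rewrite Rabs_mult, (Rabs_right lam) by lra.
    assert (Rabs (if (i =? 0)%nat then t else 0) <= lam * M).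
    { destruct (i =? 0)%nat; auto. rewrite Rabs_R0. nra. }
    assert (lam * Rabs (DSg i x - DSc i x) <= lam * M) by (apply Rmult_le_compat_l; lra). lra.
  - exists r. split; auto.
  - intros x Hx. cbn [Nat.eqb]. rewrite DSg1, DSc1.
    assert (Hg0 : psig x = 0).
    { destruct (bump_nonneg n' mg wg x) as [Hp|Hp]; [|auto].
      exfalso. destruct (bump_supp n' mg wg x Hwg Hp) as [k Hk]. apply (Hx k).
      apply Rabs_def2 in Hk. unfold mg, wg in Hk. lra. }
    rewrite Hg0.
    replace (DF 1%nat x + lam * (0 / Ig - psic x / Ic) + 0 - DF 1%nat x) with (- (lam * (psic x / Ic)))
      by (unfold Rdiv; ring).
    rewrite Rabs_Ropp.
    destruct (bump_nonneg n' x1 wc x) as [Hp|Hp].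
    + fold psic in Hp. left. specialize (psic_big x Hp). specialize (Hcomp x).
      assert (0 <= lam * (psic x / Ic)).
      { apply Rmult_le_pos. lra. apply Rdiv_le_0_compat; lra. }
      rewrite Rabs_right by lra. unfold kap in *. nra.
    + fold psic in Hp. rewrite <- Hp. unfold Rdiv. rewrite Rmult_0_l, Rmult_0_r, Rabs_R0.
      destruct (DF1nn x) as [Hd|Hd].
      * left. nra.
      * right. split; auto. rewrite <- Hd. ring.
  - intros x Hx.
    assert (Hform : forall m, (1 <= m <= N)%nat ->
       DF m x + lam * (DSg m x - DSc m x) + (if (m =? 0)%nat then t else 0) = lam * DSg m x).
    { intros m Hm. rewrite Hflat, DSc0ab; auto. destruct m; [lia|]. simpl. ring. }
    rewrite Hflatiff. split.
    + intro Hall. specialize (Hall 1%nat ltac:(unfold N; lia)). rewrite Hform in Hall by (unfold N; lia).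
      rewrite DSg1 in Hall.
      destruct (Rle_lt_dec x p); [left; lra|]. destruct (Rle_lt_dec q x); [right; lra|].
      exfalso. pose proof (psig_pos x ltac:(lra)).
      assert (0 < lam * (psig x / Ig)) by (apply Rmult_lt_0_compat; auto; apply Rdiv_lt_0_compat; auto).
      lra.
    + intros Hfl m Hm. rewrite Hform by auto. rewrite DSgflat; auto. ring.
Qed.
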